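(* Let $\{x^k\}_k$, $\{z^k\}_k$ be generated by the normal map-based stochastic proximal gradient method described in the context. Then for all integers $0\le m<n$ (and every sample, with the right-hand side interpreted as $+\infty$ when $L=\infty$), \[ \psi(x^n)-\psi(x^m)\le\Big(\frac{L}{2}-\frac1\lambda\Big)\|x^n-x^m\|^2+\langle F^\lambda_{\mathrm{nor}}(z^m),x^n-x^m\rangle+\frac1\lambda\langle z^n-z^m,x^n-x^m\rangle. \]
   Context: Let $\varphi:\mathbb{R}^d\to(-\infty,\infty]$ be convex, lower semicontinuous and proper, let $f:\mathbb{R}^d\to\mathbb{R}$ be continuously differentiable on an open set containing $\mathrm{dom}\,\varphi$, and set $\psi=f+\varphi$. For $\lambda>0$ let $\mathrm{prox}_{\lambda\varphi}(x)=\operatorname{argmin}_y\{\varphi(y)+\frac{1}{2\lambda}\|x-y\|^2\}$, $\mathrm{env}_{\lambda\varphi}$ the Moreau envelope with $\nabla\mathrm{env}_{\lambda\varphi}(x)=(x-\mathrm{prox}_{\lambda\varphi}(x))/\lambda$, and the normal map $F^\lambda_{\mathrm{nor}}(z)=\nabla f(\mathrm{prox}_{\lambda\varphi}(z))+\frac1\lambda(z-\mathrm{prox}_{\lambda\varphi}(z))$. Method: on a filtered probability space $(\Omega,\mathcal F,\{\mathcal F_k\}_k,\mathbb P)$, with $\lambda>0$, step sizes $\alpha_k>0$, deterministic $z^0$, $x^0=\mathrm{prox}_{\lambda\varphi}(z^0)$, and $\mathcal F_{k+1}$-measurable random vectors $g^k$, set $z^{k+1}=z^k-\alpha_k(g^k+\nabla\mathrm{env}_{\lambda\varphi}(z^k))$,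 $x^{k+1}=\mathrm{prox}_{\lambda\varphi}(z^{k+1})$. $L(\omega)=\sup_{\bar x\in\mathrm{cl}(\mathrm{conv}\{x^k(\omega)\}_k)}\mathrm{lip}\,\nabla f(\bar x)$, where $\mathrm{lip}\,\nabla f(\bar x)=\limsup_{x,x'\to\bar x,\,x\ne x'}\|\nabla f(x)-\nabla f(x')\|/\|x-x'\|$. *)

(* Defs.v *)
From HB Require Import structures.
From mathcomp Require Import all_boot all_order all_algebra.
From mathcomp Require Import all_classical all_reals ereal.
Set Implicit Arguments. Unset Strict Implicit. Unset Printing Implicit Defensive.
Import Order.TTheory GRing.Theory Num.Theory.
Local Open Scope ring_scope.
Local Open Scope classical_set_scope.

Section Defs.
Variables (R : realType) (d : nat).
Local Notation vec := 'rV[R]_d.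

Definition dotp (u v : vec) : R := \sum_(i < d) u ord0 i * v ord0 i.
Definition enorm (u : vec) : R := Num.sqrt (dotp u u).

Definition econvex (phi : vec -> \bar R) : Prop :=
  forall (x y : vec) (t : R), 0 <= t -> t <= 1 ->
    (phi (t *: x + (1 - t) *: y)%R <= t%:E * phi x + (1 - t)%:E * phi y)%E.

Definition elsc (phi : vec -> \bar R) : Prop :=
  forall (x : vec) (a : R), (a%:E < phi x)%E ->
    exists2 del : R, 0 < del &
      forall y : vec, enorm (y - x) < del -> (a%:E < phi y)%E.

Definition eproper (phi : vec -> \bar R) : Prop :=
  (forall x, phi x <> -oo%E) /\ (exists x, (phi x < +oo)%E).

Definition edom (phi : vec -> \bar R) : set vec := [set x | (phi x < +oo)%E].

Definition eopen (U : set vec) : Prop :=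
  forall x, U x -> exists2 r : R, 0 < r & forall y, enorm (y - x) < r -> U y.

Definition is_gradient_at (f : vec -> R) (gradf : vec -> vec) (x : vec) : Prop :=
  forall eps : R, 0 < eps -> exists2 del : R, 0 < del &
    forall y, enorm (y - x) < del ->
      `|f y - f x - dotp (gradf x) (y - x)| <= eps * enorm (y - x).

Definition continuous_at_e (g : vec -> vec) (x : vec) : Prop :=
  forall eps : R, 0 < eps -> exists2 del : R, 0 < del &
    forall y, enorm (y - x) < del -> enorm (g y - g x) < eps.

Definition C1_on (U : set vec) (f : vec -> R) (gradf : vec -> vec) : Prop :=
  forall x, U x -> is_gradient_at f gradf x /\ continuous_at_e gradf x.

Definition is_prox (lam : R) (phi : vec -> \bar R) (x p : vec) : Prop :=
  forall y : vec,
    (phi p + ((2 * lam)^-1 * enorm (x - p) ^+ 2)%:E <=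
     phi y + ((2 * lam)^-1 * enorm (x - y) ^+ 2)%:E)%E.

Definition lipg (g : vec -> vec) (xb : vec) : \bar R :=
  ereal_inf [set ereal_sup
     [set r : \bar R | exists x x' : vec,
        [/\ enorm (x - xb) < del, enorm (x' - xb) < del, x' != x
          & r = ((enorm (g x - g x') / enorm (x - x'))%:E)%E]]
     | del in [set del : R | 0 < del]].

Definition conv_hull (S : set vec) : set vec :=
  [set y | exists n (w : 'I_n -> R) (p : 'I_n -> vec),
     [/\ (forall i, 0 <= w i), \sum_(i < n) w i = 1, (forall i, S (p i))
       & y = \sum_(i < n) w i *: p i]].

Definition eclosure (S : set vec) : set vec :=
  [set xb | forall eps : R, 0 < eps -> exists2 y, S y & enorm (y - xb) < eps].

End Defs.

(* Main.v *)
Require Import Defs.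
From HB Require Import structures.
From mathcomp Require Import all_boot all_order all_algebra.
From mathcomp Require Import all_classical all_reals ereal.
From mathcomp Require Import ring lra.
Import Order.TTheory GRing.Theory Num.Theory.
Local Open Scope ring_scope.
Local Open Scope classical_set_scope.

Lemma dotpDl {R : realType} {d : nat} (u v w : 'rV[R]_d) : dotp (u + v) w = dotp u w + dotp v w.
Proof. by rewrite /dotp -big_split; apply: eq_bigr => i _; rewrite !mxE mulrDl. Qed.
Lemma dotpC {R : realType} {d : nat} (u v : 'rV[R]_d) : dotp u v = dotp v u.
Proof. by rewrite /dotp; apply: eq_bigr => i _; rewrite mulrC. Qed.
Lemma dotpDr {R : realType} {d : nat} (u v w : 'rV[R]_d) : dotp w (u + v) = dotp w u + dotp w v.
Proof. by rewrite dotpC dotpDl !(dotpC w). Qed.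
Lemma dotpZl {R : realType} {d : nat} (c : R) (u w : 'rV[R]_d) : dotp (c *: u) w = c * dotp u w.
Proof. by rewrite /dotp mulr_sumr; apply: eq_bigr => i _; rewrite !mxE mulrA. Qed.
Lemma dotpZr {R : realType} {d : nat} (c : R) (u w : 'rV[R]_d) : dotp w (c *: u) = c * dotp w u.
Proof. by rewrite dotpC dotpZl dotpC. Qed.
Lemma dotpNl {R : realType} {d : nat} (u w : 'rV[R]_d) : dotp (- u) w = - dotp u w.
Proof. by rewrite -scaleN1r dotpZl mulN1r. Qed.
Lemma dotpNr {R : realType} {d : nat} (u w : 'rV[R]_d) : dotp w (- u) = - dotp w u.
Proof. by rewrite dotpC dotpNl dotpC. Qed.
Lemma dotpBl {R : realType} {d : nat} (u v w : 'rV[R]_d) : dotp (u - v) w = dotp u w - dotp v w.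
Proof. by rewrite dotpDl dotpNl. Qed.
Lemma dotpBr {R : realType} {d : nat} (u v w : 'rV[R]_d) : dotp w (u - v) = dotp w u - dotp w v.
Proof. by rewrite dotpDr dotpNr. Qed.
Lemma dotp0r {R : realType} {d : nat} (w : 'rV[R]_d) : dotp w 0 = 0.
Proof. by rewrite /dotp big1 // => i _; rewrite mxE mulr0. Qed.
Lemma dotp_ge0 {R : realType} {d : nat} (u : 'rV[R]_d) : 0 <= dotp u u.
Proof. by rewrite /dotp sumr_ge0 // => i _; rewrite -expr2 sqr_ge0. Qed.
Lemma dotp_eq0 {R : realType} {d : nat} (u : 'rV[R]_d) : dotp u u = 0 -> u = 0.
Proof.
move=> /eqP; rewrite /dotp psumr_eq0 => [/allP H|i _]; last by rewrite -expr2 sqr_ge0.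
apply/rowP => i; rewrite mxE; apply/eqP; rewrite -sqrf_eq0 expr2.
by have := H i (mem_index_enum i); rewrite implyTb.
Qed.
Lemma enorm_sq {R : realType} {d : nat} (u : 'rV[R]_d) : enorm u ^+ 2 = dotp u u.
Proof. by rewrite /enorm sqr_sqrtr // dotp_ge0. Qed.
Lemma enorm_ge0 {R : realType} {d : nat} (u : 'rV[R]_d) : 0 <= enorm u.
Proof. exact: sqrtr_ge0. Qed.
Lemma enorm_gt0 {R : realType} {d : nat} (u : 'rV[R]_d) : u != 0 -> 0 < enorm u.
Proof.
move=> H; rewrite /enorm sqrtr_gt0 lt_def dotp_ge0 andbT.
by apply/eqP => /dotp_eq0 /eqP; apply/negP.
Qed.
Lemma enormZ {R : realType} {d : nat} (c : R) (u : 'rV[R]_d) : enorm (c *: u) = `|c| * enorm u.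
Proof.
by rewrite /enorm dotpZl dotpZr mulrA -expr2 sqrtrM ?sqr_ge0 // sqrtr_sqr.
Qed.
Lemma enormN {R : realType} {d : nat} (u : 'rV[R]_d) : enorm (- u) = enorm u.
Proof. by rewrite -scaleN1r enormZ normrN1 mul1r. Qed.
Lemma enormB {R : realType} {d : nat} (u v : 'rV[R]_d) : enorm (u - v) = enorm (v - u).
Proof. by rewrite -enormN opprB. Qed.
Lemma dotp_quad {R : realType} {d : nat} (a b : R) (u v : 'rV[R]_d) :
  dotp (a *: u + b *: v) (a *: u + b *: v) =
  a ^+ 2 * dotp u u + 2 * a * b * dotp u v + b ^+ 2 * dotp v v.
Proof.
rewrite !(dotpDl, dotpDr, dotpZl, dotpZr) (dotpC v u); ring.
Qed.
Lemma CS {R : realType} {d : nat} (u v : 'rV[R]_d) : `|dotp u v| <= enorm u * enorm v.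
Proof.
have [->|vn0] := eqVneq v 0.
  by rewrite dotp0r normr0 mulr_ge0 // enorm_ge0.
have hB : 0 < dotp v v by rewrite -enorm_sq exprn_gt0 // enorm_gt0.
have H := dotp_ge0 (dotp v v *: u + (- dotp u v) *: v).
rewrite dotp_quad in H.
have H2 : dotp u v ^+ 2 <= dotp u u * dotp v v.
  have : 0 <= dotp v v * (dotp u u * dotp v v - dotp u v ^+ 2) by nra.
  by rewrite pmulr_rge0 // subr_ge0.
rewrite /enorm -sqrtrM ?dotp_ge0 // -(sqrtr_sqr (dotp u v)).
by rewrite ler_sqrt // mulr_ge0 // dotp_ge0.
Qed.
Lemma enorm_triangle {R : realType} {d : nat} (u v : 'rV[R]_d) : enorm (u + v) <= enorm u + enorm v.
Proof.
rewrite -(ler_pXn2r (n:=2)) ?nnegrE ?addr_ge0 ?enorm_ge0 //.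
rewrite enorm_sq dotpDl !dotpDr (dotpC v u) sqrrD !enorm_sq.
have := CS u v; have := ler_norm (dotp u v); lra.
Qed.

Lemma min_facts {R : realType} {a b : R} : 0 < a -> 0 < b ->
  [/\ 0 < Num.min a b, Num.min a b <= a & Num.min a b <= b].
Proof.
move=> ha hb; split; first by rewrite lt_min ha hb.
- by rewrite ge_min lexx.
- by rewrite ge_min lexx orbT.
Qed.

Lemma RI {R : realType} (Q : R -> Prop) :
  Q 0 ->
  (forall t, 0 <= t -> t <= 1 -> exists2 del, 0 < del &
     forall lo hi, 0 <= lo -> lo <= hi -> hi <= 1 -> (lo = t \/ hi = t) ->
       hi - lo < del -> Q lo -> Q hi) ->
  forall t, 0 <= t -> t <= 1 -> Q t.
Proof.
move=> Q0 Hloc.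
pose A := [set u : R | [/\ 0 <= u, u <= 1 & forall s, 0 <= s -> s <= u -> Q s]].
have A0 : A 0 by split => // s s0 s1; have -> : s = 0 by apply/eqP; rewrite eq_le s1 s0.
have hs : has_sup A by split; [exists 0 | exists 1 => u [] ].
pose c := sup A.
have c0 : 0 <= c by apply: sup_upper_bound.
have c1 : c <= 1 by apply: ge_sup; [exists 0 | move=> u []].
have C1 : forall s, 0 <= s -> s < c -> Q s.
  move=> s s0 sc; have cs : 0 < c - s by rewrite subr_gt0.
  have [e [e0 e1 e2] he] := sup_adherent cs hs.
  apply: e2 => //; rewrite -/c in he; lra.
have [del del0 Hd] := Hloc c c0 c1.
have Qc : Q c.
  have [->|cn0] := eqVneq c 0; first by [].
  have cp : 0 < c by rewrite lt_def cn0 c0.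
  have [m0 m1 m2] := min_facts cp del0.
  apply: (Hd (c - Num.min c del / 2)); [lra|lra|lra|by right|lra|].
  apply: C1; lra.
have Cc : forall s, 0 <= s -> s <= c -> Q s.
  move=> s s0; rewrite le_eqVlt => /orP [/eqP -> //|]; exact: C1.
have c1' : c = 1.
  apply/eqP; rewrite eq_le c1 /=; apply/negP => /negP; rewrite -ltNge => c1s.
  have c1p : 0 < 1 - c by rewrite subr_gt0.
  have [m0 m1 m2] := min_facts c1p del0.
  set h := c + Num.min (1 - c) del / 2.
  have : h <= c.
    apply: sup_upper_bound => //; split; rewrite /h; try lra.
    move=> s s0 sh; have [sc|cs] := leP s c; first exact: Cc.
    apply: (Hd c) => //; [lra|lra|by left|lra].
  rewrite /h; lra.
move=> t t0 t1; apply: Cc => //; lra.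
Qed.

Lemma seg_sub {R : realType} {d : nat} (a b : 'rV[R]_d) (s t : R) :
  (s *: b + (1-s) *: a) - (t *: b + (1-t) *: a) = (s - t) *: (b - a).
Proof. by apply/rowP => i; rewrite !mxE; ring. Qed.

Lemma seg_dist {R : realType} {d : nat} (a b : 'rV[R]_d) (s t : R) :
  enorm ((s *: b + (1-s) *: a) - (t *: b + (1-t) *: a)) = `|s - t| * enorm (b - a).
Proof. by rewrite seg_sub enormZ. Qed.

Lemma endpt_abs {R : realType} {lo hi t : R} : lo <= hi -> (lo = t \/ hi = t) ->
  `|lo - t| <= hi - lo /\ `|hi - t| <= hi - lo.
Proof.
move=> h [<-|<-]; rewrite subrr normr0 ?subr_ge0; split => //.
  by rewrite ger0_norm ?subr_ge0.
by rewrite distrC ger0_norm ?subr_ge0.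
Qed.

Lemma stepA {R : realType} {d : nat} (g : 'rV[R]_d -> 'rV[R]_d) (a b : 'rV[R]_d) (L : R) :
  (forall t, 0 <= t -> t <= 1 -> exists2 del, 0 < del & forall x x',
     enorm (x - (t *: b + (1-t) *: a)) < del -> enorm (x' - (t *: b + (1-t) *: a)) < del ->
     enorm (g x - g x') <= L * enorm (x - x')) ->
  forall t, 0 <= t -> t <= 1 ->
    enorm (g (t *: b + (1-t) *: a) - g a) <= L * t * enorm (b - a).
Proof.
move=> Hl; set nD := enorm (b - a).
have nD0 : 0 <= nD by apply: enorm_ge0.
apply: RI.
  have -> : (0 : R) *: b + (1 - 0) *: a = a by rewrite scale0r add0r subr0 scale1r.
  by rewrite subrr /enorm dotp0r sqrtr0 mulr0 mul0r.
move=> t t0 t1; have [del del0 Hd] := Hl t t0 t1.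
exists (del / (nD + 1)); first by rewrite divr_gt0 // ltr_wpDl.
move=> lo hi lo0 lohi hi1 ht hd Qlo.
have [el eh] := endpt_abs lohi ht.
have hd' : (hi - lo) * nD < del.
  have : (hi - lo) * (nD + 1) < del by rewrite -ltr_pdivlMr // ltr_wpDl.
  have : 0 <= hi - lo by rewrite subr_ge0.
  nra.
have Hb := Hd (hi *: b + (1 - hi) *: a) (lo *: b + (1 - lo) *: a).
rewrite !seg_dist [`|hi - lo|]ger0_norm ?subr_ge0 // in Hb.
have Hb' := Hb (le_lt_trans (ler_wpM2r nD0 eh) hd') (le_lt_trans (ler_wpM2r nD0 el) hd').
have -> : g (hi *: b + (1 - hi) *: a) - g a =
   (g (lo *: b + (1 - lo) *: a) - g a) + (g (hi *: b + (1 - hi) *: a) - g (lo *: b + (1 - lo) *: a)).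
  by rewrite [RHS]addrC addrA subrK.
apply: le_trans (enorm_triangle _ _) _.
have : L * lo * nD + L * ((hi - lo) * nD) = L * hi * nD by ring.
move=> E; rewrite -/nD in Hb'; lra.
Qed.

Lemma algA {R : realType} {L E eps G Y lo hi fa flo fhi : R} :
  0 <= hi - lo -> (hi - lo) * (`|L| * E) <= eps -> - (`|L| * E) <= L * E ->
  Y <= L * lo * E ->
  flo - fa - lo * G <= L / 2 * lo ^+ 2 * E + eps * lo ->
  fhi - flo - (hi - lo) * (G + Y) <= eps / 2 * (hi - lo) ->
  fhi - fa - hi * G <= L / 2 * hi ^+ 2 * E + eps * hi.
Proof.
move=> h0 hLE LE HY Q gr.
have p1 : (hi - lo) * Y <= (hi - lo) * (L * lo * E) by rewrite ler_wpM2l.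
have p2 : (hi - lo) * (- (`|L| * E)) <= (hi - lo) * (L * E) by rewrite ler_wpM2l.
have p3 : (hi - lo) * (- eps) <= (hi - lo) * ((hi - lo) * (L * E)).
  rewrite ler_wpM2l //; lra.
nra.
Qed.

Lemma algB {R : realType} {L E eps G Y lo hi fa flo fhi : R} :
  0 <= hi - lo -> (hi - lo) * (`|L| * E) <= eps -> L * E <= `|L| * E ->
  Y <= L * hi * E ->
  flo - fa - lo * G <= L / 2 * lo ^+ 2 * E + eps * lo ->
  - (flo - fhi - (lo - hi) * (G + Y)) <= eps / 2 * (hi - lo) ->
  fhi - fa - hi * G <= L / 2 * hi ^+ 2 * E + eps * hi.
Proof.
move=> h0 hLE LE HY Q gr.
have p1 : (hi - lo) * Y <= (hi - lo) * (L * hi * E) by rewrite ler_wpM2l.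
have p3 : (hi - lo) * ((hi - lo) * (L * E)) <= (hi - lo) * eps.
  rewrite ler_wpM2l //; have : (hi - lo) * (L * E) <= (hi - lo) * (`|L| * E).
    by rewrite ler_wpM2l.
  lra.
nra.
Qed.

Lemma descent {R : realType} {d : nat} (f : 'rV[R]_d -> R) (g : 'rV[R]_d -> 'rV[R]_d)
   (a b : 'rV[R]_d) (L : R) :
  (forall t, 0 <= t -> t <= 1 -> is_gradient_at f g (t *: b + (1-t) *: a)) ->
  (forall t, 0 <= t -> t <= 1 -> exists2 del, 0 < del & forall x x',
     enorm (x - (t *: b + (1-t) *: a)) < del -> enorm (x' - (t *: b + (1-t) *: a)) < del ->
     enorm (g x - g x') <= L * enorm (x - x')) ->
  forall eps, 0 < eps ->
  f b - f a <= dotp (g a) (b - a) + L / 2 * dotp (b - a) (b - a) + eps.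
Proof.
move=> Hg Hl eps eps0.
have SA := stepA g a b L Hl.
set nD := enorm (b - a).
have nD0 : 0 <= nD by apply: enorm_ge0.
set E := dotp (b - a) (b - a).
have EnD : E = nD ^+ 2 by rewrite /nD enorm_sq.
set G := dotp (g a) (b - a).
pose seg t := t *: b + (1 - t) *: a.
have QB : forall t, 0 <= t -> t <= 1 ->
   f (seg t) - f a - t * G <= L / 2 * t ^+ 2 * E + eps * t.
  apply: RI.
    have -> : seg 0 = a by rewrite /seg scale0r add0r subr0 scale1r.
    by rewrite subrr mul0r subr0 expr0n /= mulr0 mul0r mulr0 addr0.
  move=> t t0 t1.
  have eps'0 : 0 < eps / (2 * (nD + 1)) by rewrite divr_gt0 // mulr_gt0 // ltr_wpDl.
  have [del del0 Hd] := Hg t t0 t1 _ eps'0.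
  have d10 : 0 < del / (nD + 1) by rewrite divr_gt0 // ltr_wpDl.
  have d20 : 0 < eps / (`|L| * E + 1) by rewrite divr_gt0 // ltr_wpDl // mulr_ge0 // EnD sqr_ge0.
  have [m0 m1 m2] := min_facts d10 d20.
  exists (Num.min (del / (nD + 1)) (eps / (`|L| * E + 1))) => // lo hi lo0 lohi hi1 ht hd Qlo.
  set h := hi - lo.
  have h0 : 0 <= h by rewrite subr_ge0.
  have hnd : h * nD < del.
    have : h * (nD + 1) < del by rewrite -ltr_pdivlMr ?ltr_wpDl //; exact: lt_le_trans hd m1.
    nra.
  have hLE : h * (`|L| * E) <= eps.
    have : h * (`|L| * E + 1) < eps.
      rewrite -ltr_pdivlMr; first exact: lt_le_trans hd m2.
      by rewrite ltr_wpDl // mulr_ge0 // EnD sqr_ge0.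
    have : 0 <= `|L| * E by rewrite mulr_ge0 // EnD sqr_ge0.
    nra.
  have E0 : 0 <= E by rewrite EnD sqr_ge0.
  have LE1a : L * E <= `|L| * E by rewrite ler_wpM2r // ler_norm.
  have LE1b : - (`|L| * E) <= L * E.
    by rewrite -mulNr ler_wpM2r // lerNl -normrN ler_norm.
  set Y := dotp (g (seg t) - g a) (b - a).
  have HY : Y <= L * t * E.
    have := CS (g (seg t) - g a) (b - a); rewrite -/Y -/nD => cs.
    have := SA t t0 t1; rewrite -/nD -/(seg t) => sa.
    have := ler_norm Y.
    have : enorm (g (seg t) - g a) * nD <= L * t * nD * nD by rewrite ler_wpM2r.
    rewrite EnD; nra.
  have XG : dotp (g (seg t)) (b - a) = G + Y by rewrite /Y dotpBl /G; ring.
  have [el eh] := endpt_abs lohi ht.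
  have Hgr : forall s, `|s - t| <= h ->
     `|f (seg s) - f (seg t) - (s - t) * (G + Y)| <= eps / 2 * `|s - t|.
    move=> s st.
    have Hs := Hd (seg s).
    rewrite /seg seg_dist seg_sub dotpZr -/nD -/(seg s) -/(seg t) XG in Hs.
    apply: le_trans (Hs _) _.
      by apply: le_lt_trans hnd; rewrite ler_wpM2r.
    have : eps / (2 * (nD + 1)) * nD <= eps / 2.
      have k : nD / (nD + 1) <= 1 by rewrite ler_pdivrMr ?ltr_wpDl // mul1r lerDl.
      have -> : eps / (2 * (nD + 1)) * nD = eps / 2 * (nD / (nD + 1)) by rewrite invfM; ring.
      have : 0 <= eps / 2 by rewrite divr_ge0 // ltW.
      nra.
    have := normr_ge0 (s - t); nra.
  rewrite /h in h0 hLE.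
  case: ht => ht; subst t.
  - have := Hgr hi eh; rewrite [`|hi - lo|]ger0_norm ?subr_ge0 // => gr.
    have gr' := le_trans (ler_norm _) gr.
    exact: (algA h0 hLE LE1b HY Qlo gr').
  - have := Hgr lo el; rewrite [`|lo - hi|]distrC [`|hi - lo|]ger0_norm ?subr_ge0 // => gr.
    have gr' : - (f (seg lo) - f (seg hi) - (lo - hi) * (G + Y)) <= eps / 2 * (hi - lo).
      by apply: (le_trans _ gr); rewrite -normrN ler_norm.
    exact: (algB h0 hLE LE1a HY Qlo gr').
have := QB 1 ler01 (lexx _).
have -> : seg 1 = b by rewrite /seg scale1r subrr scale0r addr0.
rewrite expr1n !mulr1 mul1r; lra.
Qed.

Lemma prox_fin {R : realType} {d : nat} (lam : R) (phi : 'rV[R]_d -> \bar R) (z p : 'rV[R]_d) :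
  eproper phi -> is_prox lam phi z p -> exists P : R, phi p = P%:E.
Proof.
move=> [nm [x0 hx0]] hp; have := hp x0.
case E: (phi p) => [P| |] //; first by exists P.
  move: hx0; case: (phi x0) => [r| |] //= _.
by have := nm p; rewrite E.
Qed.

Lemma prox_ineq {R : realType} {d : nat} (lam : R) (phi : 'rV[R]_d -> \bar R)
   (z p q : 'rV[R]_d) (P Q : R) :
  0 < lam -> econvex phi -> is_prox lam phi z p -> phi p = P%:E -> phi q = Q%:E ->
  P - Q <= lam^-1 * dotp (z - p) (p - q).
Proof.
move=> lam0 cvx hp hP hQ.
set il := lam^-1.
have il0 : 0 < il by rewrite invr_gt0.
have h2 : (2 * lam)^-1 = il / 2 by rewrite invfM mulrC.
set A := dotp (z - p) (z - p).
set D := dotp (z - p) (q - p).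
set E := dotp (q - p) (q - p).
have E0 : 0 <= E by apply: dotp_ge0.
have key : forall t, 0 < t -> t <= 1 ->
    t * P <= t * Q + il / 2 * (- 2 * t * D + t ^+ 2 * E).
  move=> t t0 t1.
  have := cvx q p t (ltW t0) t1; rewrite hP hQ -!EFinM -EFinD => hc.
  have := le_trans (hp (t *: q + (1 - t) *: p)) (leeD2r _ hc).
  rewrite hP -!EFinD lee_fin !enorm_sq h2.
  have -> : z - (t *: q + (1 - t) *: p) = 1 *: (z - p) + (- t) *: (q - p).
    by apply/rowP => i; rewrite !mxE; ring.
  rewrite dotp_quad -/A -/D -/E.
  have : il / 2 * (1 ^+ 2 * A + 2 * 1 * - t * D + (- t) ^+ 2 * E) =
         il / 2 * A + il / 2 * (- 2 * t * D + t ^+ 2 * E) by ring.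
  lra.
have -> : dotp (z - p) (p - q) = - D by rewrite /D -dotpNr opprB.
apply/ler_addgt0Pr => e e0.
set c := il / 2 * E.
have c0 : 0 <= c by rewrite mulr_ge0 // divr_ge0 // ltW.
have ec0 : 0 < e + c by rewrite ltr_wpDr.
set t := e / (e + c).
have t0 : 0 < t by rewrite divr_gt0.
have t1 : t <= 1 by rewrite ler_pdivrMr // mul1r lerDl.
have et : t * (e + c) = e by rewrite /t mulrAC -mulrA divff ?mulr1 // gt_eqF.
have := key t t0 t1.
have : il / 2 * (- 2 * t * D + t ^+ 2 * E) = t * (- il * D) + t * (t * c) by rewrite /c; field.
move=> ->.
have te : t * c <= e by have := mulr_ge0 (ltW t0) (ltW e0); nra.
move=> H.
have : t * (P - Q - (- il * D) - t * c) <= 0 by nra.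
rewrite pmulr_rle0 //; rewrite mulNr mulrN; lra.
Qed.

Lemma loclip {R : realType} {d : nat} (g : 'rV[R]_d -> 'rV[R]_d) (xb : 'rV[R]_d) (L : R) :
  (lipg g xb < L%:E)%E -> exists2 del, 0 < del & forall x x',
     enorm (x - xb) < del -> enorm (x' - xb) < del ->
     enorm (g x - g x') <= L * enorm (x - x').
Proof.
move=> /ereal_inf_lt [y [del del0 <-]] hy; exists del => // x x' hx hx'.
have [->|nx] := eqVneq x' x.
  by rewrite !subrr /enorm dotp0r sqrtr0 mulr0.
have hpos : 0 < enorm (x - x') by apply: enorm_gt0; rewrite subr_eq0 eq_sym.
have := le_lt_trans (ereal_sup_ubound _) hy.
move=> /(_ ((enorm (g x - g x') / enorm (x - x'))%:E)).
rewrite lte_fin ltr_pdivrMr // => H; apply: ltW; apply: H.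
by exists x, x'; split.
Qed.

Lemma seg_hull {R : realType} {d : nat} (xs : nat -> 'rV[R]_d) m n t :
  0 <= t -> t <= 1 ->
  eclosure (conv_hull (range xs)) (t *: xs n + (1 - t) *: xs m).
Proof.
move=> t0 t1 eps eps0; exists (t *: xs n + (1 - t) *: xs m); last first.
  by rewrite subrr /enorm dotp0r sqrtr0.
exists 2%N, (fun i : 'I_2 => if val i == 0%N then t else 1 - t),
  (fun i : 'I_2 => if val i == 0%N then xs n else xs m).
split.
- by move=> i; case: ifP => _ //; rewrite subr_ge0.
- by rewrite !big_ord_recl big_ord0 /= addr0 addrC subrK.
- by move=> i; case: ifP => _; [exists n | exists m].
- by rewrite !big_ord_recl big_ord0 /= addr0.
Qed.

Theorem lemma2p8 (R : realType) (d : nat)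
    (phi : 'rV[R]_d -> \bar R) (f : 'rV[R]_d -> R) (gradf : 'rV[R]_d -> 'rV[R]_d)
    (U : set 'rV[R]_d)
    (Omega : Type) (lam : R) (alpha : nat -> R) (z0 : 'rV[R]_d)
    (g : nat -> Omega -> 'rV[R]_d) (z x : nat -> Omega -> 'rV[R]_d) :
  econvex phi -> elsc phi -> eproper phi ->
  eopen U -> edom phi `<=` U -> C1_on U f gradf ->
  0 < lam -> (forall k, 0 < alpha k) ->
  (forall w, z 0%N w = z0) ->
  (forall k w, is_prox lam phi (z k w) (x k w)) ->
  (forall k w, z k.+1 w =
     z k w - alpha k *: (g k w + lam^-1 *: (z k w - x k w))) ->
  forall (w : Omega) (m n : nat), (m < n)%N ->
  forall Lr : R,
    ereal_sup [set lipg gradf xb | xb in eclosure (conv_hull (range (fun k => x k w)))]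
      = Lr%:E ->
    ((f (x n w))%:E + phi (x n w) - ((f (x m w))%:E + phi (x m w)) <=
     ((Lr / 2 - lam^-1) * enorm (x n w - x m w) ^+ 2
      + dotp (gradf (x m w) + lam^-1 *: (z m w - x m w)) (x n w - x m w)
      + lam^-1 * dotp (z n w - z m w) (x n w - x m w))%:E)%E.
Proof.
move=> cvx _ prop _ domU C1 lam0 _ _ hprox _ w m n _ Lr HLr.
set a := x m w; set b := x n w.
have [Pa hPa] := prox_fin _ _ _ _ prop (hprox m w).
have [Pb hPb] := prox_fin _ _ _ _ prop (hprox n w).
rewrite hPa hPb -!EFinD lee_fin.
have Hph := prox_ineq _ _ _ _ _ _ _ lam0 cvx (hprox n w) hPb hPa.
rewrite -/a -/b in Hph.
have inU : forall t, 0 <= t -> t <= 1 -> U (t *: b + (1 - t) *: a).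
  move=> t t0 t1; apply: domU; rewrite /edom /=.
  apply: (le_lt_trans (cvx b a t t0 t1)).
  by rewrite /b /a hPa hPb -!EFinM -EFinD ltry.
have Hgr : forall t, 0 <= t -> t <= 1 -> is_gradient_at f gradf (t *: b + (1 - t) *: a).
  by move=> t t0 t1; have [] := C1 _ (inU t t0 t1).
have Hlip : forall L', Lr < L' -> forall t, 0 <= t -> t <= 1 ->
   exists2 del, 0 < del & forall x1 x1',
     enorm (x1 - (t *: b + (1-t) *: a)) < del -> enorm (x1' - (t *: b + (1-t) *: a)) < del ->
     enorm (gradf x1 - gradf x1') <= L' * enorm (x1 - x1').
  move=> L' hL t t0 t1; apply: loclip.
  apply: (le_lt_trans _ (_ : Lr%:E < L'%:E)%E); last by rewrite lte_fin.
  rewrite -HLr; apply: ereal_sup_ubound; exists (t *: b + (1 - t) *: a) => //.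
  exact: seg_hull.
set E := dotp (b - a) (b - a).
have E0 : 0 <= E by apply: dotp_ge0.
have -> : enorm (b - a) ^+ 2 = E by rewrite enorm_sq.
rewrite dotpDl dotpZl.
have HH : dotp (z n w - b) (b - a) = dotp (z n w - z m w) (b - a) + dotp (z m w - a) (b - a) - E.
  have -> : z n w - b = (z n w - z m w) + (z m w - a) - (b - a).
    by apply/rowP => i; rewrite !mxE; ring.
  by rewrite dotpBl dotpDl.
rewrite HH in Hph.
apply/ler_addgt0Pr => e e0.
set eps := e / (E + 2).
have eps0 : 0 < eps by rewrite divr_gt0 // ltr_wpDl.
have epsE : eps * (E + 2) = e by rewrite /eps mulrAC -mulrA divff ?mulr1 // gt_eqF // ltr_wpDl.
have hL : Lr < Lr + eps by rewrite ltrDl.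
have Hd := descent f gradf a b (Lr + eps) Hgr (Hlip _ hL) eps eps0.
rewrite -/E in Hd.
have : (Lr + eps) / 2 * E + eps = Lr / 2 * E + e / 2.
  by rewrite -epsE; field.
lra.
Qed.
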